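(* Let $k$ be a field, $I$ a directed set, and $(X_i)_{i\in I}$ an inverse system (indexed by $I$, with $k$-morphisms as transition maps) of irreducible affine $k$-schemes, each $X_i$ of finite type over $k$. Let $X = \varprojlim_{i\in I} X_i$ with natural morphisms $\pi_i : X\to X_i$, and assume that $X$ is irreducible, that $X_{\mathrm{red}}$ is of finite type over $k$, and that $\dim(X) = \dim(X_i)$ for all $i\in I$. Then there exists a cofinal subset $J\subset I$ such that for every $j\in J$ the induced morphism $X_{\mathrm{red}} \to (X_j)_{\mathrm{red}}$ is an isomorphism.
   Context: $\dim$ denotes Krull dimension of the underlying topological space; $Y_{\mathrm{red}}$ denotes the reduced closed subscheme of a scheme $Y$ with the same underlying space. *)

(* Defs.v *)
(* Affine k-schemes are encoded through their coordinate
   rings (anti-equivalence Spec). *)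
From HB Require Import structures.
From mathcomp Require Import all_boot all_order all_algebra.
Set Implicit Arguments. Unset Strict Implicit. Unset Printing Implicit Defensive.
Import GRing.Theory.
Local Open Scope ring_scope.

(* k-algebra homomorphisms = k-morphisms of affine k-schemes (reversed) *)
Definition kmorph (k : fieldType) (A B : comAlgType k) (f : A -> B) : Prop :=
  (forall a b, f (a + b) = f a + f b) /\ (forall a b, f (a * b) = f a * f b) /\
  f 1 = 1 /\ (forall (c : k) a, f (c *: a) = c *: f a).

Definition directed (I : Type) (le : I -> I -> Prop) : Prop :=
  inhabited I /\ (forall i, le i i) /\ (forall i j l, le i j -> le j l -> le i l) /\
  (forall i j, exists l, le i l /\ le j l).

(* an inverse system of affine k-schemes Spec (A i) over (I, le):
   for i <= j the transition map X_j -> X_i is Spec of f i j : A i -> A j *)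
Definition dir_system (k : fieldType) (I : Type) (le : I -> I -> Prop)
  (A : I -> comAlgType k) (f : forall i j, le i j -> A i -> A j) : Prop :=
  (forall i j (h : le i j), kmorph (f i j h)) /\
  (forall i (h : le i i) x, f i i h x = x) /\
  (forall i j l (h1 : le i j) (h2 : le j l) (h3 : le i l) x,
      f j l h2 (f i j h1 x) = f i l h3 x).

Definition cocone (k : fieldType) (I : Type) (le : I -> I -> Prop)
  (A : I -> comAlgType k) (f : forall i j, le i j -> A i -> A j)
  (C : comAlgType k) (psi : forall i, A i -> C) : Prop :=
  (forall i, kmorph (psi i)) /\
  (forall i j (h : le i j) x, psi j (f i j h x) = psi i x).

(* (B, phi) is the colimit of the system of k-algebras, i.e.
   Spec B = lim_i Spec (A i) with pi_i = Spec (phi i) *)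
Definition is_colimit (k : fieldType) (I : Type) (le : I -> I -> Prop)
  (A : I -> comAlgType k) (f : forall i j, le i j -> A i -> A j)
  (B : comAlgType k) (phi : forall i, A i -> B) : Prop :=
  cocone f phi /\
  forall (C : comAlgType k) (psi : forall i, A i -> C), cocone f psi ->
    (exists u : B -> C, kmorph u /\ forall i x, u (phi i x) = psi i x) /\
    (forall u v : B -> C, kmorph u -> kmorph v ->
       (forall i x, u (phi i x) = psi i x) -> (forall i x, v (phi i x) = psi i x) ->
       forall b, u b = v b).

Definition nilpotent (k : fieldType) (A : comAlgType k) (a : A) : Prop :=
  exists n : nat, a ^+ n = 0.

(* Spec A is irreducible iff the nilradical of A is a prime ideal *)
Definition spec_irreducible (k : fieldType) (A : comAlgType k) : Prop :=
  ~ nilpotent (1 : A) /\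
  forall a b : A, nilpotent (a * b) -> nilpotent a \/ nilpotent b.

Definition subalg (k : fieldType) (A : comAlgType k) (S : A -> Prop) : Prop :=
  S 1 /\ (forall a b, S a -> S b -> S (a + b)) /\
  (forall a b, S a -> S b -> S (a * b)) /\ (forall (c : k) a, S a -> S (c *: a)).

Definition generated (k : fieldType) (A : comAlgType k) (s : seq A) (x : A) : Prop :=
  forall S : A -> Prop, subalg S -> (forall y, y \in s -> S y) -> S x.

Definition finite_type (k : fieldType) (A : comAlgType k) : Prop :=
  exists s : seq A, forall x, generated s x.

(* (Spec A)_red = Spec (A / nil A) of finite type over k:
   A / nil(A) is generated by the classes of finitely many elements *)
Definition red_finite_type (k : fieldType) (A : comAlgType k) : Prop :=
  exists s : seq A, forall x, exists y, generated s y /\ nilpotent (x - y).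

Definition prime_ideal (k : fieldType) (A : comAlgType k) (P : A -> Prop) : Prop :=
  P 0 /\ (forall a b, P a -> P b -> P (a + b)) /\ (forall a b, P b -> P (a * b)) /\
  ~ P 1 /\ (forall a b, P (a * b) -> P a \/ P b).

(* Spec A has a chain of irreducible closed subsets of length n, i.e.
   there is a chain p_0 ⊊ p_1 ⊊ ... ⊊ p_n of prime ideals *)
Definition has_chain (k : fieldType) (A : comAlgType k) (n : nat) : Prop :=
  exists p : nat -> A -> Prop,
    (forall m, (m <= n)%N -> prime_ideal (p m)) /\
    (forall m, (m < n)%N ->
       (forall a, p m a -> p m.+1 a) /\ exists a, p m.+1 a /\ ~ p m a).

(* dim Spec A = dim Spec B (in N ∪ {∞}) *)
Definition same_dim (k : fieldType) (A B : comAlgType k) : Prop :=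
  forall n, has_chain A n <-> has_chain B n.

(* the morphism (Spec B)_red -> (Spec A)_red induced by g : A -> B is an
   isomorphism, i.e. A/nil(A) -> B/nil(B) induced by g is bijective *)
Definition red_iso (k : fieldType) (A B : comAlgType k) (g : A -> B) : Prop :=
  (forall b, exists a, nilpotent (b - g a)) /\
  (forall a, nilpotent (g a) -> nilpotent a).

(* Main.v *)
Require Import Defs.
From HB Require Import structures.
Set Warnings "-notation-overridden,-ambiguous-paths,-redundant-canonical-projection,-projection-no-head-constant".
From mathcomp Require Import all_boot all_order all_algebra.
From Stdlib Require ClassicalDescription.
From mathcomp Require Import zify.
Set Implicit Arguments. Unset Strict Implicit. Unset Printing Implicit Defensive.
Import GRing.Theory.
Local Open Scope ring_scope.
Section KM.
Variables (k : fieldType) (A B : comAlgType k) (g : A -> B).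
Hypothesis hg : kmorph g.
Lemma km0 : g 0 = 0.
Proof. case: hg => hD _; apply: (addrI (g 0)); by rewrite -hD !addr0. Qed.
Lemma kmN a : g (- a) = - g a.
Proof. case: hg => hD _; apply/eqP; rewrite -subr_eq0 opprK -hD addNr km0 //. Qed.
Lemma kmB a b : g (a - b) = g a - g b.
Proof. case: hg => hD _; by rewrite hD kmN. Qed.
Lemma kmX a n : g (a ^+ n) = g a ^+ n.
Proof. case: hg => _ [hM [h1 _]]; elim: n => [|n IH]; first by rewrite !expr0.
by rewrite !exprS hM IH. Qed.
End KM.

Section Surj.
Local Unset Implicit Arguments.
Variables (k : fieldType) (I : Type) (le : I -> I -> Prop)
  (A : I -> comAlgType k) (f : forall i j, le i j -> A i -> A j)
  (B : comAlgType k) (phi : forall i, A i -> B).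
Hypotheses (hdir : directed le) (hsys : dir_system f) (hcol : is_colimit f phi).

Definition Uimg (b : B) : Prop := exists i a, b = phi i a.
Definition pb : pred B := fun b => if ClassicalDescription.excluded_middle_informative (Uimg b) then true else false.
Lemma pbP b : pb b <-> Uimg b.
Proof. rewrite /pb; case: ClassicalDescription.excluded_middle_informative => //. Qed.

Lemma phi_up i j (h : le i j) a : phi i a = phi j (f i j h a).
Proof. by case: hcol => [[_ hc] _]; rewrite hc. Qed.

Lemma Uimg2 b c : Uimg b -> Uimg c -> exists l a a', b = phi l a /\ c = phi l a'.
Proof.
move=> [i [a ->]] [j [a' ->]].
case: hdir => _ [_ [_ hub]]; have [l [h1 h2]] := hub i j.
by exists l, (f i l h1 a), (f j l h2 a'); rewrite -!phi_up.
Qed.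

Lemma pb_closed : GRing.subsemialg_closed pb.
Proof.
case: hcol => [[hk _] _].
case: hdir => [[i0] _].
split.
- apply/pbP; exists i0, 1; by case: (hk i0) => _ [_ [-> _]].
- split; first by apply/pbP; exists i0, 0; rewrite km0.
  move=> x y /pbP hx /pbP hy; apply/pbP.
  have [l [a [a' [-> ->]]]] := Uimg2 _ _ hx hy.
  by exists l, (a + a'); case: (hk l) => -> _.
- move=> c x /pbP [i [a ->]]; apply/pbP; exists i, (c *: a).
  by case: (hk i) => _ [_ [_ ->]].
- move=> x y /pbP hx /pbP hy; apply/pbP.
  have [l [a [a' [-> ->]]]] := Uimg2 _ _ hx hy.
  by exists l, (a * a'); case: (hk l) => _ [-> _].
Qed.

Definition subT := {x : B | pb x}.
HB.instance Definition _ := Choice.on subT.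
HB.instance Definition _ := [isSub of subT for sval].
HB.instance Definition _ := GRing.SubChoice_isSubAlgebra.Build k B pb subT pb_closed.
HB.instance Definition _ := GRing.SubNzRing_isSubComNzRing.Build B pb subT.

Lemma phi_pb i a : pb (phi i a).
Proof. by apply/pbP; exists i, a. Qed.

Definition psi i (a : A i) : subT := exist _ (phi i a) (phi_pb i a).

Lemma colim_surj b : Uimg b.
Proof.
have hc := hcol; case: hc => [[hk hcc] hu].
have cpsi : cocone f psi.
  split.
  - move=> i; case: (hk i) => hD [hM [h1 hZ]].
    split; [move=> a b'|split; [move=> a b'|split; [|move=> c a]]]; apply: val_inj => /=.
    + by rewrite hD.
    + by rewrite hM.
    + by rewrite h1.
    + by rewrite hZ.
  - by move=> i j h x; apply: val_inj => /=; rewrite hcc.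
have [[u [ku hu1]] _] := hu _ _ cpsi.
have [_ huniq] := hu _ _ (proj1 hcol).
have kv : kmorph (fun b => val (u b)).
  case: ku => hD [hM [h1 hZ]].
  split; [move=> a b'|split; [move=> a b'|split; [|move=> c a]]].
  + by rewrite hD.
  + by rewrite hM.
  + by rewrite h1.
  + by rewrite hZ.
have kid : kmorph (fun b : B => b) by [].
have := huniq (fun b => b) (fun b => val (u b)) kid kv (fun i x => erefl) _ b.
move=> ->; last by move=> i x; rewrite hu1.
by apply/pbP; exact: valP.
Qed.
End Surj.
Fixpoint box (r d : nat) : seq (seq nat) :=
  if r is r'.+1 then [seq (m :: t) | m <- iota 0 d.+1, t <- box r' d]%N else [:: [::]].
Lemma box_S r d : box r.+1 d = [seq (m :: t) | m <- iota 0 d.+1, t <- box r d]%N.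
Proof. by []. Qed.
Lemma mem_box r d e : (e \in box r d) = (size e == r) && all (fun m => m <= d)%N e.
Proof.
elim: r e => [|r IH] e.
  by case: e => [|m e]; rewrite mem_seq1.
rewrite box_S; apply/allpairsP/idP.
- move=> [[m' t] [hm ht ->]]; move: hm ht; rewrite IH mem_iota /= => hm /andP [/eqP -> ->].
  by rewrite eqxx andbT; rewrite add0n in hm.
- case: e => [|m e] // /andP [hs /andP [hm ha]].
  exists (m, e); split; last by [].
    by rewrite mem_iota add0n ltnS.
  by rewrite IH -(eqSS (size e)) hs; exact: ha.
Qed.

Lemma box_uniq r d : uniq (box r d).
Proof.
elim: r => [|r IH] //; rewrite box_S; apply: allpairs_uniq => //; first exact: iota_uniq.
by move=> [m t] [m' t'] _ _ /= [-> ->].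
Qed.

Lemma size_box r d : size (box r d) = (d.+1 ^ r)%N.
Proof. elim: r => [|r IH] //; by rewrite box_S size_allpairs size_iota IH expnS. Qed.

Section Mono.
Variables (k : fieldType) (R : comAlgType k).

Fixpoint mono (x : seq R) (e : seq nat) : R :=
  match x, e with a :: x', m :: e' => a ^+ m * mono x' e' | _, _ => 1 end.

Definition eval (c : seq nat -> k) (x : seq R) d : R :=
  \sum_(e <- box (size x) d) c e *: mono x e.

Fixpoint hornerL (gs : seq R) (a : R) : R :=
  if gs is g :: gs' then g + a * hornerL gs' a else 0.

Lemma eval_cons c a x d :
  eval c (a :: x) d = \sum_(m <- iota 0 d.+1) a ^+ m * eval (fun t => c (m :: t)) x d.
Proof.
rewrite /eval [size _]/= box_S big_allpairs_dep; apply: eq_bigr => m _.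
by rewrite mulr_sumr; apply: eq_bigr => t _; rewrite scalerAr.
Qed.

Lemma horner_sum a (G : nat -> R) j n :
  \sum_(m <- iota j n) a ^+ m * G m = a ^+ j * hornerL [seq G m | m <- iota j n] a.
Proof.
elim: n j => [|n IH] j /=; first by rewrite big_nil mulr0.
by rewrite big_cons IH mulrDr exprS mulrCA mulrA.
Qed.

Section PrimeL.
Variables (P : R -> Prop) (hP : prime_ideal P).
Lemma pr0 : P 0. Proof. by case: hP. Qed.
Lemma prD a b : P a -> P b -> P (a + b). Proof. by case: hP => _ [h _]; apply: h. Qed.
Lemma prMr a b : P b -> P (a * b). Proof. by case: hP => _ [_ [h _]]; apply: h. Qed.
Lemma prMl a b : P a -> P (a * b). Proof. by rewrite mulrC; apply: prMr. Qed.
Lemma pr1 : ~ P 1. Proof. by case: hP => _ [_ [_ [h _]]]. Qed.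
Lemma prM a b : P (a * b) -> P a \/ P b. Proof. by case: hP => _ [_ [_ [_ h]]]; apply: h. Qed.
Lemma prN a : P a -> P (- a). Proof. by move=> h; rewrite -mulN1r; apply: prMr. Qed.
Lemma prB a b : P a -> P b -> P (a - b). Proof. by move=> ha hb; apply: prD => //; apply: prN. Qed.
Lemma prX a n : P (a ^+ n) -> P a.
Proof.
elim: n => [|n IH]; first by rewrite expr0 => /pr1.
by rewrite exprS => /prM [] // /IH.
Qed.
Lemma prnil a : nilpotent a -> P a.
Proof. by move=> [n hn]; apply: (@prX a n); rewrite hn; apply: pr0. Qed.
Lemma prZ1 (c : k) : c != 0 -> ~ P (c *: 1).
Proof.
move=> hc h; apply: pr1.
have -> : (1 : R) = (c^-1 *: 1) * (c *: 1) by rewrite -scalerAl mul1r scalerA mulVf // scale1r.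
by apply: prMr.
Qed.
Lemma prXn a n : ~ P a -> ~ P (a ^+ n).
Proof. by move=> h /prX. Qed.
Lemma prMn a b : ~ P a -> ~ P b -> ~ P (a * b).
Proof. by move=> ha hb /prM []. Qed.
End PrimeL.

Lemma hornerL_notin (q0 q1 : R -> Prop) a gs :
  prime_ideal q0 -> prime_ideal q1 -> (forall b, q0 b -> q1 b) -> q1 a -> ~ q0 a ->
  (forall g, g \in gs -> g = 0 \/ ~ q1 g) -> (exists2 g, g \in gs & ~ q1 g) ->
  ~ q0 (hornerL gs a).
Proof.
move=> p0 p1 sub ha1 ha0; elim: gs => [|g gs IH] hgs [g' hg' ng'] //=.
have case1 : ~ q1 g -> ~ q0 (g + a * hornerL gs a).
  move=> ng h; apply: ng; have := sub _ h => h1.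
  have -> : g = (g + a * hornerL gs a) - a * hornerL gs a by rewrite addrK.
  by apply: (prB p1) => //; apply: (prMl p1).
move: hg'; rewrite inE => /orP [/eqP eg|hg'].
  by subst g'; apply: case1.
have [->|ng] := hgs g (mem_head _ _); last exact: case1.
rewrite add0r; apply: (prMn p0) => //; apply: IH; last by exists g'.
by move=> g0 h0; apply: hgs; rewrite inE h0 orbT.
Qed.

Lemma key_chain d (x : seq R) (q : nat -> R -> Prop) c :
  (forall i, (i <= size x)%N -> prime_ideal (q i)) ->
  (forall i, (i < size x)%N -> (forall a, q i a -> q i.+1 a) /\ q i.+1 (nth 0 x i) /\ ~ q i (nth 0 x i)) ->
  (exists2 e, e \in box (size x) d & c e != 0) -> ~ q 0 (eval c x d).
Proof.
elim: x q c => [|a x IH] q c hpr hch [e he hce].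
  move: he; rewrite /= inE => /eqP ee; subst e.
  by rewrite /eval /= big_cons big_nil addr0; apply: prZ1 => //; apply: hpr.
rewrite eval_cons (horner_sum a (fun m => eval (fun t => c (m :: t)) x d) 0 d.+1) expr0 mul1r.
have [sub01 [ha1 ha0]] := hch 0%N isT.
have hIH m : (exists2 t, t \in box (size x) d & c (m :: t) != 0) ->
    ~ q 1%N (eval (fun t => c (m :: t)) x d).
  move=> hex; apply: (IH (fun i => q i.+1)) => [i hi|i hi|//].
    exact: hpr.
  exact: hch.
apply: (hornerL_notin (q1 := q 1%N)) => //; try by apply: hpr.
- move=> g; case/mapP => m _ ->.
  case: (boolP (has (fun t => c (m :: t) != 0) (box (size x) d))) => [/hasP [t ht hct]|hn].
    by right; apply: hIH; exists t.
  left; rewrite /eval big1_seq // => t /andP [_ ht].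
  move/hasPn: hn => /(_ t ht); rewrite negbK => /eqP ->; by rewrite scale0r.
- move: he => /allpairsP [[m t] [hm ht ee]]; subst e.
  exists (eval (fun t => c (m :: t)) x d); first (apply: (@map_f _ _ (fun m => eval (fun t => c (m :: t)) x d)); exact: hm).
  by apply: hIH; exists t.
Qed.
End Mono.
Fixpoint addv (e e' : seq nat) : seq nat :=
  match e, e' with m :: e1, m' :: e1' => (m + m')%N :: addv e1 e1' | _, _ => [::] end.

Lemma box_le r D D' e : (D <= D')%N -> e \in box r D -> e \in box r D'.
Proof.
rewrite !mem_box => hD /andP [-> ha] /=; apply/allP => m hm.
by apply: leq_trans hD; apply: (allP ha).
Qed.

Lemma addv_box r D D' e e' : e \in box r D -> e' \in box r D' -> addv e e' \in box r (D + D').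
Proof.
elim: e e' r => [|m e IH] [|m' e'] r; rewrite !mem_box //=.
case: r => // r; rewrite !eqSS => /andP [hs /andP [hm ha]] /andP [hs' /andP [hm' ha']].
have := IH e' r; rewrite !mem_box hs hs' ha ha' => /(_ isT isT) /andP [-> ->].
by rewrite leq_add.
Qed.

Section Span.
Variables (k : fieldType) (R : comAlgType k).
Implicit Types (x y : R) (s : seq R).

Lemma mono_addv s e e' : size e = size s -> size e' = size s ->
  mono s e * mono s e' = mono s (addv e e').
Proof.
elim: s e e' => [|a s IH] [|m e] [|m' e'] //=; first by rewrite mulr1.
all: try by move=> [].
all: try by move=> _ [].
by move=> [hs] [hs']; rewrite -IH // exprD mulrACA.
Qed.

Lemma mono_nseq s : mono s (nseq (size s) 0%N) = 1.
Proof. by elim: s => //= a s ->; rewrite expr0 mulr1. Qed.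

Definition inspan s D x := exists l : seq (k * seq nat),
  all (fun p => p.2 \in box (size s) D) l /\ x = \sum_(p <- l) p.1 *: mono s p.2.

Lemma inspan_le s D D' x : (D <= D')%N -> inspan s D x -> inspan s D' x.
Proof.
move=> hD [l [ha ->]]; exists l; split => //; apply/allP => p hp.
by apply: (box_le hD); apply: (allP ha).
Qed.

Lemma inspan0 s D : inspan s D 0.
Proof. by exists [::]; rewrite big_nil. Qed.

Lemma inspanD s D x y : inspan s D x -> inspan s D y -> inspan s D (x + y).
Proof.
move=> [l [ha ->]] [l' [ha' ->]]; exists (l ++ l'); by rewrite all_cat ha ha' big_cat.
Qed.

Lemma inspanZ s D (c : k) x : inspan s D x -> inspan s D (c *: x).
Proof.
move=> [l [ha ->]]; exists [seq (c * p.1, p.2) | p <- l]; split.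
  by rewrite all_map; apply: sub_all ha => p.
rewrite big_map scaler_sumr; apply: eq_bigr => p _; by rewrite scalerA.
Qed.

Lemma inspanM s D D' x y : inspan s D x -> inspan s D' y -> inspan s (D + D') (x * y).
Proof.
move=> [l [ha ->]] [l' [ha' ->]].
exists [seq (p.1 * q.1, addv p.2 q.2) | p <- l, q <- l']; split.
  apply/allP => z /allpairsP [[p q] [hp hq ->]] /=.
  by apply: addv_box; [apply: (allP ha) | apply: (allP ha')].
rewrite big_allpairs_dep mulr_suml; apply: eq_big_seq => p hp.
rewrite mulr_sumr; apply: eq_big_seq => q hq.
have sp : size p.2 = size s by move: (allP ha p hp); rewrite mem_box => /andP [/eqP].
have sq : size q.2 = size s by move: (allP ha' q hq); rewrite mem_box => /andP [/eqP].
by rewrite -scalerAl -scalerAr scalerA mono_addv.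
Qed.

Lemma inspan1 s : inspan s 0 1.
Proof.
exists [:: (1, nseq (size s) 0%N)]; split.
  apply/allP => p; rewrite mem_seq1 => /eqP -> /=.
  by rewrite (mem_box (size s) 0 (nseq (size s) 0%N)) size_nseq eqxx; apply/allP => m /nseqP [->].
by rewrite big_cons big_nil addr0 scale1r mono_nseq.
Qed.

Lemma mono_nth s i : (i < size s)%N -> exists2 e, e \in box (size s) 1 & mono s e = nth 0 s i.
Proof.
elim: s i => [|a s IH] [|i] // hi.
  exists (1%N :: nseq (size s) 0%N); last by rewrite /= mono_nseq expr1 mulr1.
  rewrite mem_box /= size_nseq eqxx /=; apply/allP => m /nseqP [->] //.
have [e he hm] := IH i hi; exists (0%N :: e); last by rewrite /= expr0 mul1r hm.
by move: he; rewrite !mem_box /= eqSS.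
Qed.

Lemma inspan_gen s y : y \in s -> inspan s 1 y.
Proof.
move=> hy; have hi : (index y s < size s)%N by rewrite index_mem.
have [e he hm] := mono_nth hi; rewrite nth_index // in hm.
exists [:: (1, e)]; split; first by apply/allP => p; rewrite mem_seq1 => /eqP ->.
by rewrite big_cons big_nil addr0 scale1r hm.
Qed.

Lemma gen_inspan s x : generated s x -> exists D, inspan s D x.
Proof.
move=> hg; apply: (hg (fun z => exists D, inspan s D z)).
- split; first by exists 0%N; apply: inspan1.
  split; first by move=> a b [D ha] [D' hb]; exists (maxn D D'); apply: inspanD;
    [apply: inspan_le ha; apply: leq_maxl | apply: inspan_le hb; apply: leq_maxr].
  split; first by move=> a b [D ha] [D' hb]; exists (D + D')%N; apply: inspanM.
  by move=> c a [D ha]; exists D; apply: inspanZ.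
- by move=> y hy; exists 1%N; apply: inspan_gen.
Qed.

Lemma inspanX s E y m : inspan s E y -> inspan s (m * E) (y ^+ m).
Proof.
move=> hy; elim: m => [|m IH]; first by rewrite expr0 mul0n; apply: inspan1.
by rewrite exprS mulSn; apply: inspanM.
Qed.

Lemma inspan_mono s E d (y : seq R) t : (forall z, z \in y -> inspan s E z) ->
  t \in box (size y) d -> inspan s (size y * (d * E)) (mono y t).
Proof.
elim: y t => [|a y IH] t hy.
  by rewrite mem_seq1 => /eqP -> /=; apply: inspan1.
rewrite mem_box; case: t => [|m t] //= /andP [hs /andP [hm ht]].
rewrite mulSn; apply: inspanM.
  apply: (@inspan_le _ (m * E)); first by rewrite leq_mul2r hm orbT.
  by apply: inspanX; apply: hy; rewrite mem_head.
apply: IH; first by move=> z hz; apply: hy; rewrite inE hz orbT.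
by rewrite mem_box -(eqSS (size t)) hs.
Qed.

Lemma inspan_list s (y : seq R) : (forall z, z \in y -> exists D, inspan s D z) ->
  exists E, forall z, z \in y -> inspan s E z.
Proof.
elim: y => [|a y IH] hy; first by exists 0%N.
have [E hE] : exists E, forall z, z \in y -> inspan s E z.
  by apply: IH => z hz; apply: hy; rewrite inE hz orbT.
have [D hD] := hy a (mem_head _ _).
exists (maxn E D) => z; rewrite inE => /orP [/eqP ->|hz].
  by apply: inspan_le hD; apply: leq_maxr.
by apply: inspan_le (hE z hz); apply: leq_maxl.
Qed.
End Span.
Section LinDep.
Variables (k : fieldType) (R : comAlgType k).

Lemma sum_idx (ws : seq (seq nat)) x (G : seq nat -> R) : uniq ws -> x \in ws ->
  \sum_(j < size ws | x == nth [::] ws j) G (nth [::] ws j) = G x.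
Proof.
move=> uw hx; have hi : (index x ws < size ws)%N by rewrite index_mem.
rewrite (big_pred1 (Ordinal hi)) /=; first by rewrite nth_index.
move=> j /=; apply/eqP/eqP => [e|->]; last by rewrite nth_index.
by apply: val_inj => /=; rewrite e index_uniq.
Qed.

Lemma lin_dep (L ws : seq (seq nat)) (v w : seq nat -> R) :
  uniq L -> uniq ws -> (size ws < size L)%N ->
  (forall e, e \in L -> exists l : seq (k * seq nat),
      all (fun p => p.2 \in ws) l /\ v e = \sum_(p <- l) p.1 *: w p.2) ->
  exists c : seq nat -> k, (exists2 e, e \in L & c e != 0) /\ \sum_(e <- L) c e *: v e = 0.
Proof.
move=> uL uw hsz hv.
pose P e (l : seq (k * seq nat)) :=
  (e \in L) ==> (all (fun p => p.2 \in ws) l && (v e == \sum_(p <- l) p.1 *: w p.2)).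
have hP e : exists l, P e l.
  case: (boolP (e \in L)) => he; last by exists [::]; rewrite /P (negbTE he).
  by have [l [h1 h2]] := hv e he; exists l; rewrite /P he h1 h2 eqxx.
have [lf hlf0] : exists lf : seq nat -> seq (k * seq nat), forall e, P e (lf e).
  by exists (fun e => xchoose (hP e)) => e; apply: xchooseP.
have hlf e : e \in L -> all (fun p => p.2 \in ws) (lf e) /\ v e = \sum_(p <- lf e) p.1 *: w p.2.
  by move=> he; have := hlf0 e; rewrite /P he /= => /andP [-> /eqP ->].
pose coef e (j : 'I_(size ws)) := \sum_(p <- lf e | p.2 == nth [::] ws j) p.1.
have hcoef e : e \in L -> v e = \sum_(j < size ws) coef e j *: w (nth [::] ws j).
  move=> he; have [ha ->] := hlf e he.
  transitivity (\sum_(p <- lf e) \sum_(j < size ws | p.2 == nth [::] ws j) p.1 *: w (nth [::] ws j)).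
    apply: eq_big_seq => p hp; rewrite (sum_idx (fun z => p.1 *: w z)) //.
    exact: (allP ha).
  rewrite (exchange_big_dep xpredT) //=; apply: eq_bigr => j _.
  by rewrite /coef scaler_suml.
pose Cm : 'M[k]_(size L, size ws) := \matrix_(i, j) coef (nth [::] L i) j.
have nfree : ~~ row_free Cm.
  by rewrite /row_free neq_ltn (leq_ltn_trans (rank_leq_col Cm) hsz).
have Kn0 : kermx Cm != 0 by rewrite kermx_eq0.
have [i0 hi0] : exists i, row i (kermx Cm) != 0.
  case: (pickP (fun i => row i (kermx Cm) != 0)) => [i hi|h0]; first by exists i.
  move: Kn0; suff -> : kermx Cm = 0 by rewrite eqxx.
  by apply/row_matrixP => i; rewrite row0; apply/eqP; move: (h0 i) => /negbFE.
pose u := row i0 (kermx Cm).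
have uC : u *m Cm = 0 by rewrite -row_mul mulmx_ker row0.
have [j0 hj0] : exists j, u 0 j != 0.
  case: (pickP (fun j => u 0 j != 0)) => [j hj|h0]; first by exists j.
  move: hi0; rewrite -/u; suff -> : u = 0 by rewrite eqxx.
  by apply/rowP => j; rewrite [RHS]mxE; apply/eqP; move: (h0 j) => /negbFE.
pose c e := \sum_(i < size L | nat_of_ord i == index e L) u 0 i.
have hc (i : 'I_(size L)) : c (nth [::] L i) = u 0 i.
  rewrite /c (big_pred1 i) // => i'; rewrite /= index_uniq //.
exists c; split.
  by exists (nth [::] L j0); [rewrite mem_nth | rewrite hc].
rewrite (big_nth [::]) big_mkord.
transitivity (\sum_(i < size L) u 0 i *: \sum_(j < size ws) Cm i j *: w (nth [::] ws j)).
  apply: eq_bigr => i _; rewrite hc (hcoef _ (mem_nth _ (ltn_ord i))).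
  by congr (_ *: _); apply: eq_bigr => j _; rewrite mxE.
under eq_bigr => i _ do rewrite scaler_sumr.
rewrite exchange_big /=; apply: big1 => j _.
under eq_bigr => i _ do rewrite scalerA.
rewrite -scaler_suml.
have := congr1 (fun A : 'M[k]_(1, size ws) => A 0 j) uC; rewrite mxE [RHS]mxE => ->.
by rewrite scale0r.
Qed.
End LinDep.
Lemma build_seq (T : Type) (x0 : T) (Q : nat -> T -> Prop) N :
  (forall i, (i < N)%N -> exists a, Q i a) ->
  exists y : seq T, size y = N /\ forall i, (i < N)%N -> Q i (nth x0 y i).
Proof.
elim: N => [|N IH] h; first by exists [::].
have [y [sy hy]] := IH (fun i hi => h i (leqW hi)).
have [a ha] := h N (ltnSn N).
exists (rcons y a); split; first by rewrite size_rcons sy.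
move=> i hi; rewrite nth_rcons sy; case: (ltnP i N) => [|hge]; first by apply: hy.
have -> : i = N by apply/eqP; rewrite eqn_leq hge -ltnS hi.
by rewrite eqxx.
Qed.

Lemma expn_mono m1 m2 e : (m1 <= m2)%N -> (m1 ^ e <= m2 ^ e)%N.
Proof. by case: e => [//|e] h; rewrite leq_exp2r. Qed.

Lemma fin_dim (k : fieldType) (A : comAlgType k) : finite_type A -> exists N, ~ has_chain A N.
Proof.
move=> [s hs]; exists (size s).+1 => -[p [hpr hch]].
have [y [sy hy]] := @build_seq A 0 (fun i a => p i.+1 a /\ ~ p i a) (size s).+1
  (fun i hi => proj2 (hch i hi)).
have [E hE] := @inspan_list k A s y (fun z _ => gen_inspan (hs z)).
set n := size s.
set K := (n.+1 * E).+1.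
set d := (K ^ n)%N.
set D := (n.+1 * (d * E))%N.
have hd : (0 < d)%N by rewrite expn_gt0.
have hsz : (size (box n D) < size (box (size y) d))%N.
  rewrite !size_box sy.
  apply: (@leq_ltn_trans ((d * K) ^ n)%N).
    by apply: expn_mono; rewrite /D /K; nia.
  by rewrite expnMn -/d -expnSr ltn_exp2r.
have hsp e : e \in box (size y) d -> inspan s D (mono y e).
  by move=> he; rewrite /D -sy; exact: inspan_mono hE he.
have [c [[e he hce] hc0]] := @lin_dep k A (box (size y) d) (box n D) (mono y) (mono s)
  (box_uniq _ _) (box_uniq _ _) hsz
  hsp.
apply: (@key_chain k A d y p c).
- by move=> i hi; apply: hpr; rewrite -sy.
- move=> i hi; rewrite sy in hi; have [h1 _] := hch i hi; have [h2 h3] := hy i hi.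
  by split.
- by exists e.
- by rewrite /eval hc0; apply: pr0; apply: hpr.
Qed.
Section NilP.
Variables (k : fieldType) (R : comAlgType k).

Lemma nil0 : nilpotent (0 : R).
Proof. by exists 1%N; rewrite expr1. Qed.

Lemma nilD (a b : R) : nilpotent a -> nilpotent b -> nilpotent (a + b).
Proof.
move=> [m ha] [n hb]; exists (m + n)%N; rewrite exprDn big1 // => i _.
case: (leqP n i) => h.
  by rewrite -(subnKC h) exprD hb mul0r mulr0 mul0rn.
have h2 : (m <= m + n - i)%N by lia.
by rewrite -(subnKC h2) exprD ha !mul0r mul0rn.
Qed.

Lemma nilMr (a b : R) : nilpotent b -> nilpotent (a * b).
Proof. by move=> [n hb]; exists n; rewrite exprMn hb mulr0. Qed.

Lemma nil_prime : spec_irreducible R -> prime_ideal (@nilpotent k R).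
Proof.
move=> [h1 h2]; split; first exact: nil0.
split; first exact: nilD.
split; first exact: nilMr.
by split.
Qed.
End NilP.

Section Lift.
Variables (k : fieldType) (A B : comAlgType k) (g : A -> B).
Hypothesis hg : kmorph g.

Lemma nil_map x : nilpotent x -> nilpotent (g x).
Proof. by move=> [n hn]; exists n; rewrite -(kmX hg) hn (km0 hg). Qed.

Lemma preim_prime (P : B -> Prop) : prime_ideal P -> prime_ideal (fun x => P (g x)).
Proof.
move=> hP; case: hg => hD [hM [h1 hZ]].
split; first by rewrite (km0 hg); apply: pr0.
split; first by move=> a b ha hb; rewrite hD; apply: prD.
split; first by move=> a b hb; rewrite hM; apply: prMr.
split; first by rewrite h1; apply: pr1.
by move=> a b; rewrite hM; apply: prM.
Qed.

Lemma lift_chain a n : spec_irreducible A ->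
  (forall b, exists a, nilpotent (b - g a)) -> nilpotent (g a) -> ~ nilpotent a ->
  has_chain B n -> has_chain A n.+1.
Proof.
move=> hirr hsurj hga hna [p [hpr hch]].
exists (fun m x => if m is m'.+1 then p m' (g x) else nilpotent x); split.
  case => [_|m hm]; first exact: nil_prime.
  by apply: preim_prime; apply: hpr.
case => [_|m hm].
  split; first by move=> x hx; apply: (prnil (hpr 0%N isT)); apply: nil_map.
  by exists a; split => //; apply: (prnil (hpr 0%N isT)).
have [hsub [b [hb1 hb0]]] := hch m hm.
split; first by move=> x; apply: hsub.
have [a' ha'] := hsurj b; exists a'; split.
  have -> : g a' = b - (b - g a') by rewrite opprB addrC subrK.
  by apply: (prB (hpr m.+1 hm)) => //; apply: (prnil (hpr m.+1 hm)).
move=> h; apply: hb0.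
have -> : b = (b - g a') + g a' by rewrite subrK.
apply: (prD (hpr m (ltnW hm))) => //.
apply: (prnil (hpr m (ltnW hm))); exact: ha'.
Qed.
End Lift.

Theorem lemma1 (k : fieldType) (I : Type) (le : I -> I -> Prop)
  (A : I -> comAlgType k) (f : forall i j, le i j -> A i -> A j)
  (B : comAlgType k) (phi : forall i, A i -> B) :
  directed le ->
  dir_system f ->
  (forall i, spec_irreducible (A i)) ->
  (forall i, finite_type (A i)) ->
  is_colimit f phi ->
  spec_irreducible B ->
  red_finite_type B ->
  (forall i, same_dim B (A i)) ->
  exists J : I -> Prop,
    (forall i, exists j, J j /\ le i j) /\
    (forall j, J j -> red_iso (phi j)).
Proof.
move=> hdir hsys hirr hft hcol hB hred hdim.
have [s hs] := hred.
have hkm i : kmorph (phi i) by case: hcol => [[hk _] _].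
have hidx : exists i0, forall y, y \in s -> exists a, y = phi i0 a.
  elim: s {hs} => [|y s IH].
    by case: hdir => [[i0] _]; exists i0.
  have [i1 h1] := IH.
  have [i [a ey]] := colim_surj _ _ _ _ _ _ _ hdir hcol y.
  case: hdir => _ [_ [_ hub]]; have [l [hl1 hl2]] := hub i i1.
  exists l => y'; rewrite inE => /orP [/eqP ->|hy'].
    by exists (f i l hl1 a); rewrite ey (phi_up _ _ _ _ _ _ _ hcol _ _ hl1).
  have [a' ->] := h1 y' hy'.
  by exists (f i1 l hl2 a'); rewrite (phi_up _ _ _ _ _ _ _ hcol _ _ hl2).
have [i0 hi0] := hidx.
exists (fun j => le i0 j); split.
  move=> i; case: hdir => _ [_ [_ hub]]; have [l [h1 h2]] := hub i i0.
  by exists l.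
move=> j hj.
have surj : forall b, exists a, nilpotent (b - phi j a).
  move=> b; have [y [hgy hn]] := hs b.
  have [a ea] : exists a, y = phi j a.
    apply: (hgy (fun z => exists a, z = phi j a)).
    - case: (hkm j) => hD [hM [h1 hZ]].
      split; first by exists 1; rewrite h1.
      split; first by move=> x z [a ->] [a' ->]; exists (a + a'); rewrite hD.
      split; first by move=> x z [a ->] [a' ->]; exists (a * a'); rewrite hM.
      by move=> c x [a ->]; exists (c *: a); rewrite hZ.
    - move=> y' hy'; have [a ->] := hi0 y' hy'.
      by exists (f i0 j hj a); rewrite (phi_up _ _ _ _ _ _ _ hcol _ _ hj).
  by exists a; rewrite -ea.
split => // a hna.
apply: Classical_Prop.NNPP => hn.
have [N hN] := fin_dim (hft j).
apply: hN; apply/(hdim j N).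
elim: N => [|n IH].
  exists (fun _ => @nilpotent k B); split; first by move=> m _; apply: nil_prime.
  by [].
apply/(hdim j n.+1).
exact: (lift_chain (hkm j) (hirr j) surj hna hn IH).
Qed.
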